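(* Let $\operatorname{d}_q=q\frac{d}{dq}$. For all integers $s_1,\dots,s_l\ge1$, $r_1,\dots,r_l\ge0$, \[ \operatorname{d}_q\left[\begin{matrix}s_1,\dots,s_l\\ r_1,\dots,r_l\end{matrix}\right]=\sum_{j=1}^{l}s_j(r_j+1)\left[\begin{matrix}s_1,\dots,s_{j-1},\,s_j+1,\,s_{j+1},\dots,s_l\\ r_1,\dots,r_{j-1},\,r_j+1,\,r_{j+1},\dots,r_l\end{matrix}\right]. \] Consequently $\operatorname{d}_q\big(\operatorname{Fil}_{k,d,l}\big)\subset\operatorname{Fil}_{k+1,d+1,l}$ for all $k,d,l\ge0$.
   Context: Bi-brackets: for integers $s_1,\dots,s_l\ge1$, $r_1,\dots,r_l\ge0$, \[ \left[\begin{matrix}s_1,\dots,s_l\\ r_1,\dots,r_l\end{matrix}\right]:=\sum_{\substack{u_1>\dots>u_l>0\\ v_1,\dots,v_l>0}}\prod_{j=1}^{l}\frac{u_j^{r_j}}{r_j!}\,\frac{v_j^{s_j-1}}{(s_j-1)!}\;q^{u_1v_1+\dots+u_lv_l}\in\mathbb{Q}[[q]]; \] its upper weight is $s_1+\dots+s_l$, lower weight $r_1+\dots+r_l$, length $l$ (the constant $1$ is regarded as the bi-bracket of length $0$). $\operatorname{Fil}_{k,d,l}$ denotes the $\mathbb{Q}$-span of those bi-brackets (including possibly $1$) whose length $t$ satisfies $t\le k$, $t\le d$, $t\le l$, whose upper weight is $\le k$ and whose lower weight is $\le d$ (this is the intersection of the upper weight, lower weight and length filtrations, where the upper weight filtration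 $\operatorname{Fil}^W_k$ is spanned by bi-brackets of length $\le k$ and upper weight $\le k$, the lower weight filtration $\operatorname{Fil}^D_d$ by bi-brackets of length $\le d$ and lower weight $\le d$, and the length filtration $\operatorname{Fil}^L_l$ by bi-brackets of length $\le l$). *)

(* Defs.v *)
From mathcomp Require Import all_boot all_order all_algebra.
Set Implicit Arguments. Unset Strict Implicit. Unset Printing Implicit Defensive.
Import Order.TTheory GRing.Theory Num.Theory.
Local Open Scope ring_scope.

(* Formal power series in Q[[q]] are represented by their coefficient
   sequences  nat -> rat  (f N = coefficient of q^N). *)

(* Indices j of 'I_l correspond to 1..l (index 0 = first entry).
   Since u_j, v_j >= 1 and sum u_j v_j = N, all u_j, v_j are <= N,
   so the (finite) sum ranges over u, v : 'I_l -> 'I_N.+1. *)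
Definition bibracket_coef (l : nat) (s r : 'I_l -> nat) (N : nat) : rat :=
  \sum_(u : {ffun 'I_l -> 'I_N.+1} |
          [forall i, 0 < val (u i)]%N &&
          [forall i : 'I_l, forall j : 'I_l, (i < j)%N ==> (val (u j) < val (u i))%N])
  \sum_(v : {ffun 'I_l -> 'I_N.+1} |
          [forall i, 0 < val (v i)]%N && ((\sum_(i < l) val (u i) * val (v i))%N == N))
  \prod_(i < l) ( ((val (u i))%:R ^+ r i / (r i)`!%:R)
                  * ((val (v i))%:R ^+ (s i - 1) / (s i - 1)`!%:R) ).

Definition bibracket (l : nat) (s r : 'I_l -> nat) : nat -> rat :=
  bibracket_coef s r.

(* d_q = q d/dq acts on coefficients by multiplication with N. *)
Definition dq (f : nat -> rat) : nat -> rat := fun N => N%:R * f N.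

Definition incr_at (l : nat) (s : 'I_l -> nat) (j : 'I_l) : 'I_l -> nat :=
  fun i => if i == j then (s i).+1 else s i.

(* Fil_{k,d,l}: Q-span of bi-brackets (length 0 bi-bracket = 1) of length t
   with t <= k, t <= d, t <= l, upper weight <= k, lower weight <= d. *)
Definition inFil (k d l : nat) (f : nat -> rat) : Prop :=
  exists (n : nat) (c : 'I_n -> rat) (L : 'I_n -> nat)
         (S R : forall i : 'I_n, 'I_(L i) -> nat),
    (forall i : 'I_n,
        ((L i <= k)%N /\ (L i <= d)%N /\ (L i <= l)%N /\
         (forall j, (1 <= S i j)%N) /\
         (\sum_(j < L i) S i j <= k)%N /\ (\sum_(j < L i) R i j <= d)%N))
    /\ f = (fun N => \sum_(i < n) c i * bibracket (S i) (R i) N).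

(* Main.v *)
Require Import Defs.
From mathcomp Require Import all_boot all_order all_algebra.
From Stdlib Require Import FunctionalExtensionality.
From mathcomp Require Import ring zify.
Import Order.TTheory GRing.Theory Num.Theory.
Local Open Scope ring_scope.
Set Implicit Arguments. Unset Strict Implicit. Unset Printing Implicit Defensive.

Lemma key_factor (u v r t : nat) :
  ((u * v)%N%:R : rat) * ((u%:R ^+ r / r`!%:R) * (v%:R ^+ (t.+1 - 1) / (t.+1 - 1)`!%:R))
  = ((t.+1 * r.+1)%N%:R) * ((u%:R ^+ r.+1 / r.+1`!%:R) * (v%:R ^+ (t.+2 - 1) / (t.+2 - 1)`!%:R)).
Proof.
rewrite !subn1 /= !factS !natrM !exprS.
have h1 : (r`!%:R : rat) != 0 by rewrite pnatr_eq0 -lt0n fact_gt0.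
have h2 : (t`!%:R : rat) != 0 by rewrite pnatr_eq0 -lt0n fact_gt0.
have h3 : (r.+1%:R : rat) != 0 by rewrite pnatr_eq0.
have h4 : (t.+1%:R : rat) != 0 by rewrite pnatr_eq0.
have e : forall n : nat, (1 + n%:R : rat) = n.+1%:R by move=> n; rewrite addrC -natr1.
by field; rewrite h1 h2 !e h3 h4.
Qed.

Lemma part1 (l : nat) (s r : 'I_l -> nat) : (forall i, 1 <= s i)%N ->
  dq (bibracket s r) = (fun N => \sum_(j < l) ((s j) * (r j).+1)%:R * bibracket (incr_at s j) (incr_at r j) N).
Proof.
move=> hs; apply: functional_extensionality => N.
rewrite /dq /bibracket /bibracket_coef mulr_sumr.
under [RHS]eq_bigr => j _ do rewrite mulr_sumr.
rewrite [RHS]exchange_big /=; apply: eq_bigr => u hu.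
rewrite mulr_sumr.
under [RHS]eq_bigr => j _ do rewrite mulr_sumr.
rewrite [RHS]exchange_big /=; apply: eq_bigr => v /andP[hv /eqP hN].
rewrite -{1}hN natr_sum mulr_suml; apply: eq_bigr => j _.
rewrite (bigD1 j) //= [in RHS](bigD1 j) //= !mulrA; congr (_ * _).
  rewrite /incr_at eqxx.
  have := hs j; case: (s j) => [|t] // _.
  by have := key_factor (u j) (v j) (r j) t; rewrite -!mulrA.
apply: eq_bigr => i hij; rewrite /incr_at (negbTE hij) //.
Qed.

Lemma inFil_ext k d l (f g : nat -> rat) : (forall N, f N = g N) -> inFil k d l f -> inFil k d l g.
Proof.
move=> e [n [c [L [S [R [h hf]]]]]]; exists n, c, L, S, R; split => //.
by apply: functional_extensionality => N; rewrite -e hf.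
Qed.

Lemma inFil0 k d l : inFil k d l (fun _ => 0).
Proof.
exists 0%N, (fun _ => 0), (fun _ => 0%N), (fun _ _ => 0%N), (fun _ _ => 0%N); split.
  by case.
by apply: functional_extensionality => N; rewrite big_ord0.
Qed.

Lemma inFil_addbb k d l (g : nat -> rat) (c : rat) (L0 : nat) (S0 R0 : 'I_L0 -> nat) :
  inFil k d l g ->
  ((L0 <= k)%N /\ (L0 <= d)%N /\ (L0 <= l)%N /\
         (forall j, (1 <= S0 j)%N) /\
         (\sum_(j < L0) S0 j <= k)%N /\ (\sum_(j < L0) R0 j <= d)%N) ->
  inFil k d l (fun N => g N + c * bibracket S0 R0 N).
Proof.
move=> [n [c' [L [S [R [hg ->]]]]]] hgood.
exists n.+1, (fun i => match unlift ord_max i with Some j => c' j | None => c end),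
 (fun i => match unlift ord_max i with Some j => L j | None => L0 end),
 (fun i => match unlift ord_max i as o return 'I_(match o with Some j => L j | None => L0 end) -> nat with Some j => S j | None => S0 end),
 (fun i => match unlift ord_max i as o return 'I_(match o with Some j => L j | None => L0 end) -> nat with Some j => R j | None => R0 end).
split.
  by move=> i; case: (unlift ord_max i) => [j|] //=.
apply: functional_extensionality => N; rewrite big_ord_recr /= unlift_none.
congr (_ + _); apply: eq_bigr => j _.
have -> : widen_ord (leqnSn n) j = lift ord_max j by apply: ord_inj; rewrite lift_max.
by rewrite liftK.
Qed.

Lemma inFil_add_fam k d l (n : nat) (c : 'I_n -> rat) (L : 'I_n -> nat)
  (S R : forall i : 'I_n, 'I_(L i) -> nat) :
  (forall i : 'I_n,
        ((L i <= k)%N /\ (L i <= d)%N /\ (L i <= l)%N /\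
         (forall j, (1 <= S i j)%N) /\
         (\sum_(j < L i) S i j <= k)%N /\ (\sum_(j < L i) R i j <= d)%N)) ->
  forall f, inFil k d l f ->
  inFil k d l (fun N => f N + \sum_(i < n) c i * bibracket (S i) (R i) N).
Proof.
elim: n c L S R => [|n IH] c L S R hg f hf.
  by apply: (inFil_ext _ hf) => N; rewrite big_ord0 addr0.
have := inFil_addbb (c (ord_max)) (IH (fun i => c (widen_ord (leqnSn n) i))
   (fun i => L (widen_ord (leqnSn n) i))
   (fun i => S (widen_ord (leqnSn n) i))
   (fun i => R (widen_ord (leqnSn n) i)) (fun i => hg _) f hf) (hg ord_max).
by apply: inFil_ext => N; rewrite big_ord_recr /= addrA.
Qed.

Lemma inFil_add k d l (f g : nat -> rat) : inFil k d l f -> inFil k d l g ->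
  inFil k d l (fun N => f N + g N).
Proof.
move=> hf [n [c [L [S [R [hg ->]]]]]].
exact: inFil_add_fam.
Qed.

Lemma inFil_sum k d l m (G : 'I_m -> nat -> rat) : (forall i, inFil k d l (G i)) ->
  inFil k d l (fun N => \sum_(i < m) G i N).
Proof.
elim: m G => [|m IH] G hG.
  by apply: (inFil_ext _ (inFil0 k d l)) => N; rewrite big_ord0.
have := inFil_add (IH (fun i => G (widen_ord (leqnSn m) i)) (fun i => hG _)) (hG ord_max).
by apply: inFil_ext => N; rewrite big_ord_recr.
Qed.

Lemma sum_incr (m : nat) (s : 'I_m -> nat) j :
  (\sum_(i < m) incr_at s j i = (\sum_(i < m) s i).+1)%N.
Proof.
rewrite (bigD1 j) //= [in RHS](bigD1 j) //= {1}/incr_at eqxx addSn.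
by congr (_.+1 + _)%N; apply: eq_bigr => i /negbTE hi; rewrite /incr_at hi.
Qed.

Theorem proposition4p2 :
  (forall (l : nat) (s r : 'I_l -> nat),
      (forall i, 1 <= s i)%N ->
      dq (bibracket s r) =
      (fun N => \sum_(j < l) ((s j) * (r j).+1)%:R
                  * bibracket (incr_at s j) (incr_at r j) N))
  /\
  (forall (k d l : nat) (f : nat -> rat),
      inFil k d l f -> inFil k.+1 d.+1 l (dq f)).
Proof.
split; first exact: part1.
move=> k d l f [n [c [L [S [R [hg ->]]]]]].
apply: (@inFil_ext _ _ _ (fun N => \sum_(i < n) \sum_(j < L i)
   (c i * ((S i j) * (R i j).+1)%:R) * bibracket (incr_at (S i) j) (incr_at (R i) j) N)).
  move=> N; rewrite /dq mulr_sumr; apply: eq_bigr => i _.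
  have [_ [_ [_ [hS _]]]] := hg i.
  have := congr1 (fun F => F N) (part1 (R i) hS); rewrite /dq /= => e.
  by rewrite mulrCA e mulr_sumr; apply: eq_bigr => j _; rewrite mulrA.
apply: inFil_sum => i; apply: inFil_sum => j.
have [h1 [h2 [h3 [h4 [h5 h6]]]]] := hg i.
have := inFil_addbb (c i * ((S i j) * (R i j).+1)%:R) (inFil0 k.+1 d.+1 l)
  (S0 := incr_at (S i) j) (R0 := incr_at (R i) j).
move=> H; apply: (inFil_ext _ (H _)) => [N|]; first by rewrite add0r.
rewrite !sum_incr; do ![split] => //; try lia.
- by move=> j'; rewrite /incr_at; case: (j' == j) => //.
Qed.
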